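(* Let $n$ be odd and let $q\ge 4$ be even. For every $w\in\mathbb{Z}_q^n$ there exists an ordering $G(0),G(1),\ldots,G(q^n-q-1)$ of the set $\mathbb{Z}_q^n\setminus\{w+(i,i,\ldots,i): 0\le i<q\}$ such that $G(j)$ and $G(j+1)$ are at Lee distance $1$ for all $0\le j<q^n-q-1$, and $G((j+q^{n-1}-1)\bmod (q^n-q)) = G(j)+(1,1,\ldots,1)$ for all $j$ (addition of words in $\mathbb{Z}_q^n$).
   Context: The Lee distance between $v=(v_1,\ldots,v_n)$ and $u=(u_1,\ldots,u_n)$ in $\mathbb{Z}_q^n$ is $\sum_{i=1}^n \min\{|v_i-u_i|,\,q-|v_i-u_i|\}$, where $v_i,u_i$ are regarded as integers in $\{0,\ldots,q-1\}$. (Such an ordering is a quasi-complementary Lee metric Gray code of $q$-ary $n$-tuples missing the $q$ words $w+(i,\ldots,i)$.) *)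

(* Defs.v *)
From mathcomp Require Import all_boot all_order all_algebra.
Set Implicit Arguments. Unset Strict Implicit. Unset Printing Implicit Defensive.
Import GRing.Theory.
Local Open Scope ring_scope.

(* q-ary words of length n: finite functions 'I_n -> 'Z_q (q >= 2 assumed
   wherever used, so that 'Z_q is Z/qZ with representatives 0..q-1). *)
Notation word q n := {ffun 'I_n -> 'Z_q}.

Definition constw (q n : nat) (i : 'Z_q) : word q n := [ffun => i].

Definition absdiff (a b : nat) : nat := (maxn a b - minn a b)%N.

Definition lee_dist (q n : nat) (v u : word q n) : nat :=
  (\sum_(k < n) minn (absdiff (v k) (u k)) (q - absdiff (v k) (u k)))%N.

(* Main.v *)
Require Import Defs.
From mathcomp Require Import all_boot all_order all_algebra.
From mathcomp Require Import zify ring.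
Set Implicit Arguments. Unset Strict Implicit. Unset Printing Implicit Defensive.
Import GRing.Theory.
Local Open Scope ring_scope.

Ltac splitif := repeat match goal with |- context [if ?b then _ else _] =>
  let H := fresh "H" in case: (boolP b) => H end.

Section Constr.
Variables (q n : nat).
Hypothesis hq : (1 < q)%N.

Local Notation W := (word q n).

Lemma Zq_val_lt (x : 'Z_q) : (x < q)%N.
Proof. by rewrite -{2}(Zp_cast hq) ltn_ord. Qed.

Lemma Zq_natE (x : 'Z_q) : (nat_of_ord x)%:R = x.
Proof. exact: natr_Zp. Qed.

Lemma Zq_q : (q%:R : 'Z_q) = 0.
Proof. exact: pchar_Zp. Qed.

Lemma Zq_nat_inj a b : (a < q)%N -> (b < q)%N -> (a%:R : 'Z_q) = b%:R -> a = b.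
Proof.
move=> ha hb /(congr1 val); rewrite /= !val_Zp_nat // !modn_small //.
Qed.

Lemma Zq_nat_neq0 a : (0 < a < q)%N -> (a%:R : 'Z_q) != 0.
Proof.
case/andP=> a0 aq; apply/eqP => /(congr1 val); rewrite /= val_Zp_nat // modn_small //.
by move=> h; rewrite h in a0.
Qed.

Lemma Zq_valD1 (a : 'Z_q) : nat_of_ord (a + 1) = ((a + 1) %% q)%N.
Proof.
by rewrite -{1}(Zq_natE a) natr1 val_Zp_nat // addn1.
Qed.

Lemma absdiffC a b : absdiff a b = absdiff b a.
Proof. by rewrite /absdiff maxnC minnC. Qed.

Lemma lee1 (a : 'Z_q) :
  minn (absdiff a ((a + 1)%R : 'Z_q)) (q - absdiff a ((a + 1)%R : 'Z_q)) = 1%N.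
Proof.
rewrite Zq_valD1 /absdiff.
have := Zq_val_lt a.
case: (ltnP (a.+1) q) => h1 h2.
  rewrite addn1 modn_small //. lia.
have e : (nat_of_ord a + 1 = q)%N by lia.
rewrite e modnn. lia.
Qed.


Lemma Zq_qm1 : (((q - 1)%N)%:R : 'Z_q) = -1.
Proof. by rewrite natrB ?Zq_q ?sub0r //; lia. Qed.

Lemma Zq_qX p : (0 < p)%N -> ((q ^ p)%N%:R : 'Z_q) = 0.
Proof. by case: p => // p _; rewrite natrX Zq_q expr0n. Qed.

Definition ev (i : nat) (c : 'Z_q) : W :=
  [ffun j : 'I_n => if nat_of_ord j == i then c else 0].

Fixpoint Qfr (p rho : nat) : W :=
  if p is p'.+1 then Qfr p' (rho %/ q) + ev p' ((rho %% q)%:R - (rho %/ q)%:R)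
  else 0.

Definition supp (p : nat) (v : W) := forall j : 'I_n, (p <= j)%N -> v j = 0.

Lemma decomp rho : rho = (rho %% q + q * (rho %/ q))%N.
Proof. by rewrite addnC mulnC -divn_eq. Qed.

Lemma bnd a b Q : (a < q)%N -> (a + q * b < q * Q)%N = (b < Q)%N.
Proof. move=> h; apply/idP/idP => h2; nia. Qed.

Lemma Qfr_S p a b : (a < q)%N -> Qfr p.+1 (a + q * b) = Qfr p b + ev p (a%:R - b%:R).
Proof.
move=> ha /=.
have q0 : (0 < q)%N by lia.
rewrite addnC (mulnC q b) divnMDl // modnMDl divn_small // addn0 modn_small //.
Qed.

Lemma Qfr_supp p rho : supp p (Qfr p rho).
Proof.
elim: p rho => [|p IH] rho j hj /=; first by rewrite ffunE.
rewrite !ffunE IH; last lia.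
case: eqP => [e|_]; first lia. by rewrite addr0.
Qed.

Lemma Qfr0 p : Qfr p 0 = 0.
Proof.
elim: p => //= p IH; rewrite div0n mod0n IH; apply/ffunP => j; rewrite !ffunE.
by case: eqP => _; ring.
Qed.

Lemma Qfr_last p : (0 < p)%N -> Qfr p (q ^ p - 1) = ev 0 (-1).
Proof.
elim: p => // p IH _.
have qp : (0 < q ^ p)%N by rewrite expn_gt0; lia.
have e : (q ^ p.+1 - 1 = (q - 1) + q * (q ^ p - 1))%N.
  rewrite expnS. nia.
rewrite e Qfr_S; last lia.
case: p IH qp e => [|p] IH qp e.
  rewrite /= expn0 subnn; apply/ffunP => j; rewrite !ffunE Zq_qm1.
  by case: eqP => _; rewrite ?subr0 ?addr0 // add0r.
rewrite IH // Zq_qm1 natrB // (Zq_qX (p:=p.+1)) //.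
idtac.
apply/ffunP => j; rewrite !ffunE; case: eqP => _; case: eqP => _; rewrite ?addr0; ring.
Qed.

Lemma Qfr_step p rho : (rho.+1 < q ^ p)%N ->
  exists2 i, (i < p)%N & Qfr p rho.+1 = Qfr p rho + ev i 1.
Proof.
elim: p rho => [|p IH] rho; first by rewrite expn0.
rewrite (decomp rho) expnS.
set a := (rho %% q)%N; set b := (rho %/ q)%N.
have ha : (a < q)%N by rewrite ltn_mod; lia.
case: (ltnP a.+1 q) => h1 h2.
  exists p => //.
  rewrite -addSn !Qfr_S //; apply/ffunP => j; rewrite !ffunE.
  case: eqP => _; rewrite -?natr1; ring.
have ea : a = (q - 1)%N by lia.
have e : (a + q * b).+1 = (0 + q * b.+1)%N by rewrite ea; nia.
have hb : (b.+1 < q ^ p)%N.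
  by rewrite -(@bnd 0) -?e //; lia.
case: (IH b hb) => i hi IHe.
exists i; first lia.
rewrite e !Qfr_S ?ea //; last lia.
rewrite IHe Zq_qm1.
apply/ffunP => j; rewrite !ffunE.
case: eqP => _; case: eqP => _; rewrite -?natr1; ring.
lia.
Qed.

Lemma q0 : (0 < q)%N. Proof. lia. Qed.

Lemma ev_at (i : nat) c (j : 'I_n) : ev i c j = if nat_of_ord j == i then c else 0.
Proof. by rewrite ffunE. Qed.

Lemma Qfr_inj p r r' : (p <= n)%N -> (r < q ^ p)%N -> (r' < q ^ p)%N ->
  Qfr p r = Qfr p r' -> r = r'.
Proof.
elim: p r r' => [|p IH] r r' hp hr hr'.
  by rewrite expn0 in hr hr'; lia.
move: hr hr'; rewrite (decomp r) (decomp r') expnS.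
have ha := ltn_pmod r q0; have ha' := ltn_pmod r' q0.
set a := (r %% q)%N; set b := (r %/ q)%N; set a' := (r' %% q)%N; set b' := (r' %/ q)%N.
rewrite !bnd // => hb hb'.
rewrite !Qfr_S // => E.
have hpn : (p < n)%N by lia.
have Eb : Qfr p b = Qfr p b'.
  apply/ffunP => j; have := congr1 (fun v : W => v j) E; rewrite !ffunE.
  case: eqP => [ej|_]; last by rewrite !addr0.
  by rewrite !Qfr_supp ?ej.
have eb := IH b b' (ltnW hpn) hb hb' Eb.
rewrite -eb in E *.
have := congr1 (fun v : W => v (Ordinal hpn)) E; rewrite !ffunE /= eqxx.
move/addrI/(congr1 (fun x => x + b%:R)); rewrite !subrK => /Zq_nat_inj -> //.
Qed.

Lemma Qfr_surj p v : (p <= n)%N -> supp p v -> exists2 r, (r < q ^ p)%N & Qfr p r = v.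
Proof.
elim: p v => [|p IH] v hp hv.
  exists 0%N; first by rewrite expn0.
  by apply/ffunP => j; rewrite ffunE hv.
have hpn : (p < n)%N by lia.
set jp := Ordinal hpn.
set v' := v - ev p (v jp).
have hv' : supp p v'.
  move=> j hj; rewrite /v' !ffunE.
  case: eqP => [ej|nej].
    have -> : j = jp by apply: ord_inj.
    by rewrite subrr.
  by rewrite hv ?subr0 //; lia.
case: (IH v' (ltnW hpn) hv') => b hb Eb.
set a := nat_of_ord (v jp + b%:R).
exists (a + q * b)%N.
  by rewrite expnS bnd // Zq_val_lt.
rewrite Qfr_S ?Zq_val_lt // Eb /a Zq_natE addrK /v' subrK //.
Qed.


Definition Qf (p r : nat) : W := locked (Qfr p r).
Lemma QfE p r : Qf p r = Qfr p r. Proof. by rewrite /Qf -lock. Qed.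
Lemma Qf_supp p r : supp p (Qf p r). Proof. rewrite QfE; exact: Qfr_supp. Qed.
Lemma Qf0 p : Qf p 0 = 0. Proof. rewrite QfE; exact: Qfr0. Qed.
Lemma Qf_last p : (0 < p)%N -> Qf p (q ^ p - 1) = ev 0 (-1).
Proof. rewrite QfE; exact: Qfr_last. Qed.
Lemma Qf_step p rho : (rho.+1 < q ^ p)%N ->
  exists2 i, (i < p)%N & Qf p rho.+1 = Qf p rho + ev i 1.
Proof. rewrite !QfE; exact: Qfr_step. Qed.
Lemma Qf_inj p r r' : (p <= n)%N -> (r < q ^ p)%N -> (r' < q ^ p)%N ->
  Qf p r = Qf p r' -> r = r'.
Proof. rewrite !QfE; exact: Qfr_inj. Qed.
Lemma Qf_surj p v : (p <= n)%N -> supp p v -> exists2 r, (r < q ^ p)%N & Qf p r = v.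
Proof. move=> h1 h2; have [r ? e] := Qfr_surj h1 h2; exists r; rewrite ?QfE //. Qed.


Definition cv p : W := [ffun j : 'I_n => if nat_of_ord j == 0%N then (odd p)%:R
  else if (nat_of_ord j < p)%N then 1 else 0].
Definition sg p : 'Z_q := if odd p then -1 else 1.
Definition blk p i : W :=
  (if p is 0 then 0 else
     cv p + [ffun j => sg p * Qf p (i %% q ^ p) j] - ev 0 (sg p * (i %/ q ^ p)%:R))
  - ev p ((i %/ q ^ p).+1%:R).

Lemma sgK p : sg p * sg p = 1.
Proof. by rewrite /sg; case: odd; rewrite ?mulrNN mulr1. Qed.

Lemma qp_gt0 p : (0 < q ^ p)%N.
Proof. by rewrite expn_gt0 q0. Qed.

Lemma divmodE p a r : (r < q ^ p)%N ->
  ((a * q ^ p + r) %/ q ^ p = a)%N /\ ((a * q ^ p + r) %% q ^ p = r)%N.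
Proof.
move=> hr; rewrite divnMDl ?qp_gt0 // divn_small // addn0 modnMDl modn_small //.
Qed.

Lemma blk_E p a r : (0 < p)%N -> (r < q ^ p)%N ->
  blk p (a * q ^ p + r) =
  cv p + [ffun j => sg p * Qf p r j] - ev 0 (sg p * a%:R) - ev p (a.+1%:R).
Proof.
case: p => // p _ hr; rewrite /blk; have [-> ->] := divmodE a hr; done.
Qed.

Lemma blk0E a : blk 0 a = - ev 0 (a.+1%:R).
Proof. by rewrite /blk expn0 divn1 sub0r. Qed.

Lemma cv_supp p : (0 < p)%N -> supp p (cv p).
Proof. move=> hp j hj; rewrite ffunE; case: eqP => [e|_]; first lia.
by rewrite ltnNge hj. Qed.

Lemma blk_supp p i : supp p.+1 (blk p i).
Proof.
move=> j hj; case: p hj => [|p] hj.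
  by rewrite blk0E !ffunE; splitif; try lia; rewrite oppr0.
rewrite /blk !ffunE Qf_supp; last lia.
splitif; try lia; ring.
Qed.

Lemma blk_top p i (hpn : (p < n)%N) : blk p i (Ordinal hpn) = - ((i %/ q ^ p).+1)%:R.
Proof.
case: p hpn => [|p] hpn.
  by rewrite blk0E !ffunE /= expn0 divn1.
rewrite /blk !ffunE /= Qf_supp //; splitif; try lia; ring.
Qed.


Definition adj (x y : W) :=
  exists (j : 'I_n) (c : 'Z_q), (c = 1 \/ c = -1) /\ y = x + ev j c.

Lemma cancel4 (c s x y e f : 'Z_q) : s * s = 1 -> c + s * x - e - f = c + s * y - e - f -> x = y.
Proof.
move=> hs h; rewrite -[x]mul1r -[y]mul1r -hs -!mulrA; congr (s * _).
by apply: (addrI c); apply: (addIr (-e)); apply: (addIr (-f)).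
Qed.

Lemma sg_pm p : sg p = 1 \/ sg p = -1.
Proof. by rewrite /sg; case: odd; [right|left]. Qed.

Lemma Zq_qm2 : (((q - 2)%N)%:R : 'Z_q) = -1 - 1.
Proof.
have e : ((q - 2).+1 = q - 1)%N by lia.
by apply: (addIr 1); rewrite natr1 e Zq_qm1 subrK.
Qed.

Lemma blk_inj p i i' (hpn : (p < n)%N) : (i < (q - 1) * q ^ p)%N -> (i' < (q - 1) * q ^ p)%N ->
  blk p i = blk p i' -> i = i'.
Proof.
move=> hi hi' E.
have t := congr1 (fun v : W => v (Ordinal hpn)) E; rewrite /= !blk_top in t.
have ha : (i %/ q ^ p < q - 1)%N by rewrite ltn_divLR ?qp_gt0.
have ha' : (i' %/ q ^ p < q - 1)%N by rewrite ltn_divLR ?qp_gt0.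
move/oppr_inj/Zq_nat_inj: t => t.
have ea : (i %/ q ^ p = i' %/ q ^ p)%N by apply/eq_add_S/t; lia.
clear t; case: p hpn hi hi' E ha ha' ea => [|p] hpn hi hi' E ha ha' ea.
  by rewrite expn0 !divn1 in ea.
move: E; rewrite (divn_eq i (q ^ p.+1)) (divn_eq i' (q ^ p.+1)) ea.
rewrite !blk_E ?ltn_pmod ?qp_gt0 // => E.
have eQ : Qf p.+1 (i %% q ^ p.+1) = Qf p.+1 (i' %% q ^ p.+1).
  apply/ffunP => j; have := congr1 (fun v : W => v j) E; rewrite !ffunE.
  exact: cancel4 (sgK _).
by rewrite (Qf_inj (ltnW hpn) _ _ eQ) // ltn_pmod ?qp_gt0.
Qed.

Lemma neg_val (x : 'Z_q) : x != 0 -> exists al, (al.+1 < q)%N /\ (al.+1%:R : 'Z_q) = - x.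
Proof.
move=> hx; set a1 := nat_of_ord (- x).
have ha1 : (0 < a1)%N.
  rewrite lt0n; apply/eqP => e; move: hx; rewrite -(opprK x) -(Zq_natE (- x)) -/a1 e.
  by rewrite oppr0 eqxx.
have ha1q : (a1 < q)%N by apply: Zq_val_lt.
exists a1.-1; rewrite prednK //; split => //; exact: Zq_natE.
Qed.

Lemma blk_surj p v (hpn : (p < n)%N) : supp p.+1 v -> v (Ordinal hpn) != 0 ->
  exists2 i, (i < (q - 1) * q ^ p)%N & blk p i = v.
Proof.
move=> hv hx; have [al [hal Eal]] := neg_val hx.
have hpos : forall j : 'I_n, nat_of_ord j = p -> j = Ordinal hpn.
  by move=> j e; apply: ord_inj.
case: p hpn hv hpos hx Eal => [|p] hpn hv hpos hx Eal.
  exists al; first by rewrite expn0 muln1; lia.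
  rewrite blk0E Eal; apply/ffunP => j; rewrite !ffunE.
  case: eqP => [/hpos ->|ne]; first by rewrite opprK.
  by rewrite hv ?oppr0 //; case: (nat_of_ord j) ne.
set u : W := [ffun j => sg p.+1 * (v j + ev p.+1 (al.+1%:R) j + ev 0 (sg p.+1 * al%:R) j - cv p.+1 j)].
have hu : supp p.+1 u.
  move=> j hj; rewrite /u !ffunE.
  case: (ltnP p.+1 j) => hj2.
    rewrite hv //; splitif; try lia; ring.
  have ej : nat_of_ord j = p.+1 by lia.
  rewrite (hpos j ej) /= eqxx ltnn Eal; ring.
have [r hr Er] := Qf_surj (ltnW hpn) hu.
exists (al * q ^ p.+1 + r)%N.
  have : (al.+1 <= q - 1)%N by lia.
  move: (qp_gt0 p.+1) hr; set Q := (q ^ p.+1)%N => hQ hr h; nia.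
rewrite blk_E // Er; apply/ffunP => j; rewrite !ffunE mulrA sgK mul1r; ring.
Qed.


Lemma blk_step p i (hpn : (p < n)%N) : (i.+1 < (q - 1) * q ^ p)%N ->
  adj (blk p i) (blk p i.+1).
Proof.
move=> hi.
case: p hpn hi => [|p] hpn hi.
  exists (Ordinal hpn), (-1); split; first by right.
  rewrite !blk0E; apply/ffunP => j; rewrite !ffunE /=.
  by splitif; rewrite -?natr1; ring.
have hp0 : (0 < p.+1)%N by [].
move: hi; rewrite (divn_eq i (q ^ p.+1)).
set a := (i %/ q ^ p.+1)%N; set r := (i %% q ^ p.+1)%N.
have hr : (r < q ^ p.+1)%N by rewrite ltn_pmod ?qp_gt0.
case: (ltnP r.+1 (q ^ p.+1)) => hr1 hi.
  have [i0 hi0 Ei0] := Qf_step hr1.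
  have hi0n : (i0 < n)%N by lia.
  exists (Ordinal hi0n), (sg p.+1); split; first exact: sg_pm.
  rewrite -addnS !blk_E // Ei0; apply/ffunP => j; rewrite !ffunE /=.
  by splitif; ring.
have er : r = (q ^ p.+1 - 1)%N by lia.
have e : (a * q ^ p.+1 + r).+1 = (a.+1 * q ^ p.+1 + 0)%N.
  by rewrite er mulSn; have := qp_gt0 p.+1; lia.
exists (Ordinal hpn), (-1); split; first by right.
rewrite e !blk_E ?qp_gt0 // Qf0 er Qf_last //; apply/ffunP => j; rewrite !ffunE /=.
by splitif; try lia; rewrite -?natr1; ring.
Qed.

Lemma blk_first p : (0 < p)%N -> blk p 0 = cv p - ev p 1.
Proof.
move=> hp; have := blk_E 0 hp (qp_gt0 p); rewrite mul0n add0n => ->.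
rewrite Qf0; apply/ffunP => j; rewrite !ffunE; splitif; ring.
Qed.

Lemma blk_last p : blk p ((q - 1) * q ^ p - 1) = cv p.+1.
Proof.
have e2 : ((q - 2).+1 = q - 1)%N by lia.
case: p => [|p].
  rewrite expn0 muln1 blk0E (_ : (q - 1 - 1 = q - 2)%N); last lia.
  rewrite e2 Zq_qm1; apply/ffunP => j; rewrite !ffunE /=; splitif; try lia; ring.
have e : ((q - 1) * q ^ p.+1 - 1 = (q - 2) * q ^ p.+1 + (q ^ p.+1 - 1))%N.
  have := qp_gt0 p.+1; set Q := (q ^ p.+1)%N => hQ; nia.
rewrite e blk_E //; last by have := qp_gt0 p.+1; lia.
rewrite Qf_last // e2 Zq_qm1 Zq_qm2 /sg /=.
apply/ffunP => j; rewrite !ffunE /=.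
case: (odd p); splitif; try lia; rewrite /=; ring.
Qed.


Fixpoint Hf (p r : nat) : W :=
  if p is p'.+1 then
    (if (r < q ^ p' - 1)%N then Hf p' r else blk p' (r - (q ^ p' - 1)))
  else 0.

Lemma Hf_supp p r : supp p (Hf p r).
Proof.
elim: p r => [|p IH] r j hj /=; first by rewrite ffunE.
case: ifP => _; last exact: blk_supp.
by rewrite IH //; lia.
Qed.

Lemma blk_top_nz p i (hpn : (p < n)%N) : (i < (q - 1) * q ^ p)%N ->
  blk p i (Ordinal hpn) != 0.
Proof.
move=> hi; rewrite blk_top oppr_eq0 Zq_nat_neq0 //.
have : (i %/ q ^ p < q - 1)%N by rewrite ltn_divLR ?qp_gt0.
set a := (i %/ q ^ p)%N; lia.

Qed.

Lemma blk_range p r : (q ^ p - 1 <= r)%N -> (r < q ^ p.+1 - 1)%N ->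
  (r - (q ^ p - 1) < (q - 1) * q ^ p)%N.
Proof.
rewrite expnS mulnBl mul1n; have := qp_gt0 p; set Q := (q ^ p)%N => hQ.
have : (Q <= q * Q)%N by rewrite leq_pmull; lia.
set P := (q * Q)%N; lia.
Qed.

Lemma Hf_nz p r : (p <= n)%N -> (r < q ^ p - 1)%N -> Hf p r != 0.
Proof.
elim: p r => [|p IH] r hp hr /=; first by rewrite expn0 in hr.
case: ifP => h; first by apply: IH => //; lia.
move/negbT: h => h.
have hpn : (p < n)%N by lia.
have hb : (r - (q ^ p - 1) < (q - 1) * q ^ p)%N by apply: blk_range => //; lia.
apply/eqP => e; move: (blk_top_nz hpn hb); rewrite e ffunE eqxx //.
Qed.

Lemma Hf_inj p r r' : (p <= n)%N -> (r < q ^ p - 1)%N -> (r' < q ^ p - 1)%N ->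
  Hf p r = Hf p r' -> r = r'.
Proof.
elim: p r r' => [|p IH] r r' hp hr hr' /=; first by rewrite expn0 in hr.
have hpn : (p < n)%N by lia.
have top0 : forall s, Hf p s (Ordinal hpn) = 0 by move=> s; rewrite Hf_supp.
case: ifP => h; case: ifP => h'; rewrite ?(negbT h) ?(negbT h'); try move/negbT: h => h; try move/negbT: h' => h'.
- by apply: IH => //; lia.
- move=> e; have hb : (r' - (q ^ p - 1) < (q - 1) * q ^ p)%N by apply: blk_range => //; lia.
  by move: (blk_top_nz hpn hb); rewrite -e top0 eqxx.
- move=> e; have hb : (r - (q ^ p - 1) < (q - 1) * q ^ p)%N by apply: blk_range => //; lia.
  by move: (blk_top_nz hpn hb); rewrite e top0 eqxx.
move=> e.
have hb : (r - (q ^ p - 1) < (q - 1) * q ^ p)%N by apply: blk_range => //; lia.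
have hb' : (r' - (q ^ p - 1) < (q - 1) * q ^ p)%N by apply: blk_range => //; lia.
have := blk_inj hpn hb hb' e; lia.
Qed.

Lemma Hf_surj p v : (p <= n)%N -> supp p v -> v != 0 ->
  exists2 r, (r < q ^ p - 1)%N & Hf p r = v.
Proof.
elim: p v => [|p IH] v hp hv hv0.
  have v0 : v = 0 by apply/ffunP => j; rewrite ffunE hv.
  by rewrite v0 eqxx in hv0.
have hpn : (p < n)%N by lia.
have hQ := qp_gt0 p.
have hQq : (q ^ p <= q ^ p.+1)%N by rewrite expnS leq_pmull //; lia.
case: (eqVneq (v (Ordinal hpn)) 0) => hx.
  have hv' : supp p v.
    move=> j hj; case: (ltnP p j) => hj2; first by rewrite hv.
    by have -> : j = Ordinal hpn by apply: ord_inj => /=; lia.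
  have [r hr Er] := IH v (ltnW hpn) hv' hv0.
  exists r; first lia.
  by rewrite /= hr.
have [i hi Ei] := blk_surj hv hx.
exists (i + (q ^ p - 1))%N.
  move: hi; rewrite expnS mulnBl mul1n; set Q := (q ^ p)%N.
  have : (Q <= q * Q)%N by rewrite leq_pmull; lia.
  set P := (q * Q)%N; lia.
rewrite /= ifF; last lia.
by rewrite addnK.
Qed.

Lemma Hf_last p : (0 < p)%N -> Hf p (q ^ p - 2) = cv p.
Proof.
case: p => // p _ /=.
have hQ := qp_gt0 p.
have : (2 * q ^ p <= q * q ^ p)%N by rewrite leq_mul2r; lia.
rewrite expnS; set Q := (q ^ p)%N; set P := (q * Q)%N => hPQ.
rewrite ifF; last by apply/negbTE; rewrite -leqNgt; lia.
have -> : (P - 2 - (Q - 1) = (q - 1) * Q - 1)%N by rewrite mulnBl mul1n -/P; lia.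
exact: blk_last.
Qed.

Lemma Hf_step p r : (p <= n)%N -> (r.+1 < q ^ p - 1)%N -> adj (Hf p r) (Hf p r.+1).
Proof.
elim: p r => [|p IH] r hp hr; first by rewrite expn0 in hr.
have hpn : (p < n)%N by lia.
have hQ := qp_gt0 p.
rewrite /=.
case: (ltnP r.+1 (q ^ p - 1)) => h1.
  rewrite ifT; last lia.
  by apply: IH => //; lia.
case: (ltnP r (q ^ p - 1)) => h2 /=.
  have er : r.+1 = (q ^ p - 1)%N by lia.
  case: p IH hp hr hpn hQ h1 h2 er => [|p] IH hp hr hpn hQ h1 h2 er.
    by rewrite expn0 in er.
  rewrite er subnn blk_first //.
  have e2 : r = (q ^ p.+1 - 2)%N by lia.
  rewrite e2 Hf_last //.
  exists (Ordinal hpn), (-1); split; first by right.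
  apply/ffunP => j; rewrite !ffunE; splitif; ring.
have e : (r.+1 - (q ^ p - 1) = (r - (q ^ p - 1)).+1)%N by lia.
rewrite e; apply: (blk_step hpn).
rewrite -e; apply: blk_range => //; lia.
Qed.

Lemma Hf_first p : (0 < p)%N -> Hf p 0 = ev 0 (-1).
Proof.
elim: p => // p IH _ /=.
case: p IH => [|p] IH.
  rewrite expn0 !subnn /= blk0E; apply/ffunP => j; rewrite !ffunE; splitif; ring.
rewrite ifT ?IH //.
have : (q <= q ^ p.+1)%N by rewrite -{1}(expn1 q) leq_pexp2l //; lia.
lia.
Qed.


Lemma absdiffnn a : absdiff a a = 0%N.
Proof. by rewrite /absdiff maxnn minnn subnn. Qed.

Lemma lee_step (x : W) (j : 'I_n) c : (c = 1 \/ c = -1) -> lee_dist x (x + ev j c) = 1%N.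
Proof.
move=> hc; rewrite /lee_dist (bigD1 j) //= big1 ?addn0.
  rewrite !ffunE eqxx; case: hc => ->; first exact: lee1.
  rewrite absdiffC; have := lee1 (x j - 1); rewrite subrK //.
move=> k hk; rewrite !ffunE; case: eqP => [e|_].
  by case/eqP: hk; apply: ord_inj.
by rewrite addr0 absdiffnn min0n.
Qed.

Lemma divmodE' m a r : (r < m)%N -> ((a * m + r) %/ m = a)%N /\ ((a * m + r) %% m = r)%N.
Proof.
move=> hr; rewrite divnMDl; last lia.
by rewrite divn_small // addn0 modnMDl modn_small.
Qed.

End Constr.

Theorem theorem3 (n q : nat) (w : word q n) :
  odd n -> (4 <= q)%N -> ~~ odd q ->
  exists G : nat -> word q n,
    [/\ (* G is injective on 0 .. q^n-q-1 *)
        (forall i j, (i < q ^ n - q)%N -> (j < q ^ n - q)%N -> G i = G j -> i = j),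
        (* its image is exactly Z_q^n minus {w + (i,...,i)} *)
        (forall x : word q n,
            (forall i : 'Z_q, x <> w + constw n i) <->
            exists2 j, (j < q ^ n - q)%N & G j = x),
        (* consecutive words at Lee distance 1 *)
        (forall j, (j.+1 < q ^ n - q)%N -> lee_dist (G j) (G j.+1) = 1%N) &
        (* shift property *)
        (forall j, (j < q ^ n - q)%N ->
            G ((j + q ^ n.-1 - 1) %% (q ^ n - q))%N = G j + constw n 1)].
Proof.
move=> hn hq4 _.
have hq : (1 < q)%N by lia.
case: n w hn => [|k] w hn //.
case: (posnP k) => hk0.
  subst k; exists (fun _ => w).
  have N0 : (q ^ 1 - q = 0)%N by rewrite expn1 subnn.
  rewrite N0; split => //.
  move=> x; split => [H|[j]]; last by [].
  exfalso; apply: (H (x ord0 - w ord0)); apply/ffunP => j.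
  by rewrite !ffunE ord1 addrC subrK.
have hkn : (k < k.+1)%N by [].
set jl : 'I_k.+1 := Ordinal hkn.
have hkev : ~~ odd k by exact: hn.
set m := (q ^ k - 1)%N.
have hqk : (q <= q ^ k)%N by rewrite -{1}(expn1 q) leq_pexp2l //; lia.
have hm : (0 < m)%N by rewrite /m; lia.
have eN : (q ^ k.+1 - q = q * m)%N by rewrite expnS /m mulnBr muln1.
rewrite eN /=.
set H := Hf q k.+1 k.
have Hjl : forall r, H r jl = 0 by move=> r; rewrite /H Hf_supp.
pose G := fun j => w + H (j %% m)%N + constw k.+1 ((j %/ m)%N%:R).
have Gj : forall j, G j = w + H (j %% m)%N + constw k.+1 ((j %/ m)%N%:R) by [].
have dlt : forall j, (j < q * m)%N -> (j %/ m < q)%N.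
  by move=> j hj; rewrite ltn_divLR // mulnC.
have mlt : forall j, (j %% m < m)%N by move=> j; rewrite ltn_pmod.
exists G; split.
- move=> i j hi hj E.
  have t := congr1 (fun v : word q k.+1 => v jl) E; rewrite /= !ffunE !Hjl !addr0 in t.
  move/addrI/(Zq_nat_inj hq (dlt _ hi) (dlt _ hj)): t => t.
  rewrite /G t in E; move/addIr/addrI: E => E.
  have := Hf_inj hq (ltnW hkn) (mlt i) (mlt j) E.
  by move=> e; rewrite (divn_eq i m) (divn_eq j m) t e.
- move=> x; split => [Hx|[j hj Ej] i Ei].
    set c := x jl - w jl.
    set v := x - w - constw k.+1 c.
    have hv : supp k v.
      move=> j hj; have -> : j = jl by apply: ord_inj => /=; have := ltn_ord j; lia.
      by rewrite /v !ffunE /c; ring.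
    have hv0 : v != 0.
      apply/eqP => e; apply: (Hx c); apply/ffunP => j.
      have := congr1 (fun u : word q k.+1 => u j) e; rewrite /v !ffunE => e2.
      by move/eqP: e2; rewrite subr_eq0 subr_eq => /eqP ->; rewrite addrC.
    have [r hr Er] := Hf_surj hq (ltnW hkn) hv hv0.
    exists (c * m + r)%N.
      have := Zq_val_lt hq c; move: hr; rewrite -/m => hr hc; nia.
    rewrite Gj; move: hr; rewrite -/m => hr; have [-> ->] := divmodE' hq (nat_of_ord c) hr.
    rewrite -/H in Er; rewrite Er Zq_natE /v; apply/ffunP => j; rewrite !ffunE; ring.
  move: Ej; rewrite Ei => Ej.
  have hH : H (j %% m)%N = constw k.+1 (i - (j %/ m)%N%:R).
    apply/ffunP => j'; have := congr1 (fun u : word q k.+1 => u j') Ej.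
    rewrite !ffunE => e.
    rewrite [LHS](_ : _ = w j' + H (j %% m)%N j' + (j %/ m)%N%:R - w j' - (j %/ m)%N%:R); last by ring.
    by rewrite e; ring.
  have ci : i - (j %/ m)%N%:R = 0 by move: (Hjl (j %% m)%N); rewrite hH ffunE.
  move: (Hf_nz hq (ltnW hkn) (mlt j)); rewrite -/H hH ci.
  by case/eqP; apply/ffunP => j'; rewrite !ffunE.
- move=> j hj; rewrite !Gj.
  have ej := divn_eq j m.
  move: (mlt j) ej; set r := (j %% m)%N; set c := (j %/ m)%N => hr ej.
  case: (ltnP r.+1 m) => hr1.
    have ej1 : j.+1 = (c * m + r.+1)%N by rewrite ej addnS.
    rewrite ej1; have [-> ->] := divmodE' hq c hr1.
    have [j0 [c0 [hc0 E0]]] := Hf_step hq (ltnW hkn) hr1.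
    rewrite -/H in E0.
    rewrite (_ : w + H r.+1 + constw k.+1 c%:R = w + H r + constw k.+1 c%:R + ev k.+1 j0 c0).
      by apply: lee_step.
    by rewrite E0; apply/ffunP => j'; rewrite !ffunE; ring.
  have er : r = (m - 1)%N by lia.
  have ej1 : j.+1 = (c.+1 * m + 0)%N by rewrite ej er mulSn; lia.
  rewrite ej1; have [-> ->] := divmodE' hq c.+1 hm.
  rewrite /H Hf_first // er (_ : (m - 1 = q ^ k - 2)%N); last by rewrite /m; lia.
  rewrite Hf_last //.
  rewrite (_ : w + ev k.+1 0 (-1) + constw k.+1 c.+1%:R = w + cv q k.+1 k + constw k.+1 c%:R + ev k.+1 jl 1).
    by apply: lee_step => //; left.
  apply/ffunP => j'; rewrite !ffunE (negbTE hkev) /=.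
  have hj' := ltn_ord j'; splitif; try lia; rewrite -?natr1; ring.
- move=> j hj.
  have e1 : (j + q ^ k - 1 = j + m)%N by rewrite /m; lia.
  rewrite e1 !Gj.
  have ej := divn_eq j m.
  move: (mlt j) ej (dlt j hj); set r := (j %% m)%N; set c := (j %/ m)%N => hr ej hcq.
  case: (ltnP c.+1 q) => hc.
    have ejm : (j + m = c.+1 * m + r)%N by rewrite ej mulSn; lia.
    have h2 : (c.+2 * m <= q * m)%N by rewrite leq_mul2r hc orbT.
    rewrite ejm (@modn_small (c.+1 * m + r)%N (q * m)%N); last by move: h2; rewrite !mulSn; lia.
    have [-> ->] := divmodE' hq c.+1 hr.
    by apply/ffunP => j'; rewrite !ffunE -natr1; ring.
  have ec : c = (q - 1)%N by lia.
  have hqm : (m <= q * m)%N by rewrite leq_pmull; lia.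
  have ejm : (j + m = q * m + r)%N by rewrite ej ec mulnBl mul1n; lia.
  rewrite ejm modnDl (@modn_small r (q * m)%N); last by lia.
  rewrite modn_small // divn_small // ec (Zq_qm1 hq).
  by apply/ffunP => j'; rewrite !ffunE; ring.
Qed.
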